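(* Let $G^{(1)},\dots,G^{(\ell)}$ be directed graphs on a common node set $V$ and run SKIM (described in the context) with sketch parameter $k$. Consider any iteration of SKIM, and let $v$ be the seed node selected in that iteration, with threshold rank $\tau_v$ (the $k$th smallest rank in its partial sketch at selection time). Then, at the end of that iteration (after the residual update), for every node $u$ not in the seed set, the updated partial sketch $X_u$ is equal to the set of entries of the combined reachability sketch $X'_u$ of $u$ in the residual problem that have rank value at most $\tau_v$.
   Context: Each node-instance pair $(z,i)$ ($z\in V$, $i\in[\ell]$) has an independent uniform random rank $r^{(i)}_z\in[0,1]$. The residual problem after an iteration is obtained from the instances by removing all covered node-instance pairs (pairs $(z,i)$ such that $z$ is reachable in $G^{(i)}$ from some already selected seed). In the residual problem, the combined reachability sketch $X'_u$ of $u$ is the set of the $k$ smallest ranks $r^{(i)}_z$ over pairs $(z,i)$ such that $z$ is reachable from $u$ in the residual instance $i$ (the graph $G^{(i)}$ restricted to its uncovered nodes), with $u$ reaching itself. SKIM with parameter $k$: maintain a set of covered pairs (initially empty), a partial sketch $X_w$ (set of ranks, initially empty) for every node $w$, and a list of seeds. Repeat: (1) process uncovered pairs $(u,i)$ in increasing rank order, continuing from where the previous iteration stopped; for each, do a reverse reachability search from $u$ in $G^{(i)}$ restricted to uncovered pairs of instance $i$, inserting $r^{(i)}_u$ into $X_w$ for every visited node $w$; stop as soon as some node $x$ has $|X_x|=k$, and select $x$ as the next seed (if all pairs are exhausted, select a node of maximum $|X_x|$). (2) For each instance $i$, do a forward reachability search from $x$ in $G^{(i)}$ pruning at covered pairs,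 mark the reached pairs as covered, and remove their ranks from all partial sketches ($X_u\leftarrow X_u\setminus X_x$). *)

(* Defs.v *)
From HB Require Import structures.
From mathcomp Require Import all_boot all_order all_algebra.
From mathcomp Require Import reals.

Set Implicit Arguments.
Unset Strict Implicit.
Unset Printing Implicit Defensive.

Import Order.TTheory GRing.Theory Num.Theory.
Local Open Scope ring_scope.

Section SKIM.
Variable R : realType.
Variable V : finType.
Variable l : nat.
Variable G : 'I_l -> rel V.      (* G i x y : edge x -> y in G^(i) *)
Variable r : V -> 'I_l -> R.
Variable k : nat.

Notation pair := (V * 'I_l)%type.

Definition rk (p : pair) : R := r p.1 p.2.

Definition resid_edge (cov : {set pair}) (i : 'I_l) : rel V :=
  [rel y z | [&& G i y z, (y, i) \notin cov & (z, i) \notin cov]].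

Definition resid_reach (cov : {set pair}) (i : 'I_l) (a b : V) : bool :=
  [&& (a, i) \notin cov, (b, i) \notin cov & connect (resid_edge cov i) a b].

Definition reach_pairs (cov : {set pair}) (u : V) : {set pair} :=
  [set p : pair | resid_reach cov p.2 u p.1].

(* the k smallest-rank elements of S (ranks are assumed distinct) *)
Definition bottomk (S : {set pair}) : {set pair} :=
  [set p in S | (#|[set q in S | (rk q < rk p)%R]| < k)%N].

Definition comb_sketch (cov : {set pair}) (u : V) : {set pair} :=
  bottomk (reach_pairs cov u).

(* k-th smallest rank of a partial sketch (1, the maximal rank value,
   if the sketch has fewer than k entries) *)
Definition kth_rank (S : {set pair}) : R :=
  nth 1 (sort <=%R [seq rk p | p <- enum S]) k.-1.

(* State of SKIM: covered pairs, partial sketches (as sets of node-instance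
   pairs, identified with their ranks), processed pairs, seed list. *)
Record state := State {
  covered : {set pair};
  sketch : {ffun V -> {set pair}};
  processed : {set pair};
  seeds : seq V
}.

Definition init_state : state := State set0 [ffun => set0] set0 [::].

Definition pending (s : state) (p : pair) : bool :=
  (p \notin covered s) && (p \notin processed s).

(* one step of phase (1): process the next uncovered pair (u,i) in increasing
   rank order, by a reverse residual search from u in instance i *)
Definition proc_step (s s' : state) : Prop :=
  (forall w, #|sketch s w| < k)%N /\
  exists p : pair,
    [/\ pending s p,
        (forall q, pending s q -> rk p <= rk q) &
        s' = State (covered s)
                   [ffun w => if resid_reach (covered s) p.2 w p.1
                              then p |: sketch s w else sketch s w]
                   (p |: processed s) (seeds s)].

Inductive proc_star : state -> state -> Prop :=
| proc_refl s : proc_star s s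
| proc_next s1 s2 s3 : proc_step s1 s2 -> proc_star s2 s3 -> proc_star s1 s3.

Definition selectable (s : state) (x : V) : Prop :=
  #|sketch s x| = k \/
  [/\ (forall p, ~~ pending s p), (forall w, #|sketch s w| < k)%N &
      (forall w, #|sketch s w| <= #|sketch s x|)%N].

Definition new_cov (cov : {set pair}) (x : V) : {set pair} :=
  [set p : pair | resid_reach cov p.2 x p.1].

Definition update (s : state) (x : V) : state :=
  let N := new_cov (covered s) x in
  State (covered s :|: N) [ffun w => sketch s w :\: N]
        (processed s) (rcons (seeds s) x).

Definition iteration (s s' : state) (v : V) (tau : R) : Prop :=
  exists s1, [/\ proc_star s s1, selectable s1 v,
                 tau = kth_rank (sketch s1 v) & s' = update s1 v].

Inductive skim_reachable : state -> Prop :=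
| reach_init : skim_reachable init_state
| reach_iter s s' v tau :
    skim_reachable s -> iteration s s' v tau -> skim_reachable s'.

End SKIM.

(* Main.v *)
Require Import Defs.
From HB Require Import structures.
From mathcomp Require Import all_boot all_order all_algebra.
From mathcomp Require Import reals.
Import Order.TTheory GRing.Theory Num.Theory.
Local Open Scope ring_scope.
Set Implicit Arguments.
Unset Strict Implicit.

Lemma rr_trans (V : finType) (l : nat) (G : 'I_l -> rel V) cov i a b c :
  resid_reach G cov i a b -> resid_reach G cov i b c -> resid_reach G cov i a c.
Proof.
by case/and3P=> ha _ hab /and3P [_ hc hbc]; rewrite /resid_reach ha hc (connect_trans hab hbc).
Qed.

Arguments rr_trans {V l G cov i a b c}.

Lemma key_N (V : finType) (l : nat) (G : 'I_l -> rel V) cov x i y z :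
  resid_reach G cov i y z -> ~~ resid_reach G cov i x z -> ~~ resid_reach G cov i x y.
Proof.
move=> hyz; apply: contra => hxy; exact: rr_trans hxy hyz.
Qed.

Arguments key_N {V l G cov x i y z}.

Lemma reach_update (V : finType) (l : nat) (G : 'I_l -> rel V) cov x w q :
  (q \in reach_pairs G (cov :|: new_cov G cov x) w) =
  (q \notin new_cov G cov x) && (q \in reach_pairs G cov w).
Proof.
case: q => z i; rewrite !inE /=.
set N := new_cov G cov x.
apply/idP/idP.
  case/and3P; rewrite !inE !negb_or => /andP [hw _] /andP [hz hzN] hc.
  rewrite hzN /resid_reach hw hz /=.
  apply: connect_sub hc => a b /and3P [e ha hb]; apply: connect1.
  by move: ha hb; rewrite /resid_edge /= e !inE !negb_or => /andP [-> _] /andP [-> _].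
case/andP=> hzN hr.
have hwN := key_N hr hzN.
move: (hr) => /and3P [hw hz /connectP [p hp hl]].
rewrite /resid_reach !inE !negb_or hw hz hwN hzN /=.
subst z.
clear hz; elim: p w hw hp hwN hr hzN => [|y p IH] w hw /=; first by move=> *; exact: connect0.
case/andP=> he hp hwN hr hzN.
have hy : (y, i) \notin cov by case/and3P: he.
have hry : resid_reach G cov i y (last y p).
  case/and3P: (hr) => _ hl _.
  by rewrite /resid_reach hy hl /=; apply/connectP; exists p.
have hyN := key_N hry hzN.
apply: connect_trans (IH y hy hp hyN hry hzN).
apply: connect1; case/and3P: he => e _ _.
by rewrite /resid_edge /= e !inE !negb_or hw hwN hy hyN.
Qed.
Lemma kth_max (R : realType) (V : finType) (l : nat) (r : V -> 'I_l -> R) (k : nat)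
  (S : {set V * 'I_l}) : (0 < k)%N -> #|S| = k ->
  (exists2 p0, p0 \in S & kth_rank r k S = rk r p0) /\
  (forall q, q \in S -> rk r q <= kth_rank r k S).
Proof.
move=> k0 cS; rewrite /kth_rank.
set t := sort _ _.
have st : size t = k by rewrite size_sort size_map -cardE.
have srt : sorted <=%R t by apply: sort_sorted; exact: le_total.
split.
  have : nth 1 t k.-1 \in t by apply: mem_nth; rewrite st prednK.
  rewrite mem_sort => /mapP [p0]; rewrite mem_enum => Hp0 ->.
  by exists p0.
move=> q Hq.
have qt : rk r q \in t by rewrite mem_sort; apply: map_f; rewrite mem_enum.
rewrite -(nth_index 1 qt).
apply: (sorted_leq_nth le_trans lexx) => //; rewrite ?inE ?index_mem ?st ?prednK //.
by rewrite -ltnS prednK // -st index_mem.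
Qed.

Lemma kth_small (R : realType) (V : finType) (l : nat) (r : V -> 'I_l -> R) (k : nat)
  (S : {set V * 'I_l}) : (0 < k)%N -> (#|S| < k)%N -> kth_rank r k S = 1.
Proof.
move=> k0 cS; rewrite /kth_rank nth_default // size_sort size_map -cardE.
by rewrite -ltnS prednK.
Qed.

Definition Inv (R : realType) (V : finType) (l : nat) (G : 'I_l -> rel V)
  (r : V -> 'I_l -> R) (k : nat) (s : state V l) : Prop :=
 [/\ forall w, sketch s w = [set p in processed s | p \in reach_pairs G (covered s) w],
     forall w, (#|sketch s w| <= k)%N,
     forall p q, p \in processed s -> pending s q -> rk r p <= rk r q &
     forall w, #|sketch s w| = k -> forall q, q \in processed s -> q \notin covered s ->
       exists2 p, p \in sketch s w & rk r q <= rk r p].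

Lemma inv_init (R : realType) (V : finType) (l : nat) (G : 'I_l -> rel V)
  (r : V -> 'I_l -> R) (k : nat) : Inv G r k (init_state V l).
Proof.
split=> /=.
- by move=> w; rewrite ffunE; apply/setP => q; rewrite !inE.
- by move=> w; rewrite ffunE cards0.
- by move=> p q; rewrite inE.
- by move=> w _ q; rewrite inE.
Qed.

Lemma inv_proc (R : realType) (V : finType) (l : nat) (G : 'I_l -> rel V)
  (r : V -> 'I_l -> R) (k : nat) s s' :
  Inv G r k s -> proc_step G r k s s' -> Inv G r k s'.
Proof.
case=> I1 I2 I3 I4 [Hlt [p [Hpend Hmin ->]]].
split=> /=.
- move=> w; rewrite ffunE I1; apply/setP => q; rewrite !inE.
  case: ifP => hr; rewrite !inE.
    case: (eqVneq q p) => [->|_] /=; first by rewrite hr.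
    by [].
  case: (eqVneq q p) => [->|_] /=; last by [].
  by rewrite hr andbF.
- move=> w; rewrite ffunE; case: ifP => _; last exact: ltnW.
  by rewrite cardsU1; have := Hlt w; case: (p \in _) => /=; [move/ltnW|].
- move=> p' q; rewrite !inE => Hp' Hq.
  have Hq' : pending s q by move: Hq; rewrite /pending /= inE negb_or => /andP [-> /andP [_ ->]].
  case/orP: Hp' => [/eqP ->|Hp']; first exact: Hmin.
  exact: I3.
- move=> w; rewrite ffunE; case: ifP => hr; last by move=> e; have := Hlt w; rewrite e ltnn.
  move=> _ q; rewrite !inE => Hq _; exists p; first by rewrite setU11.
  case/orP: Hq => [/eqP ->//|Hq]; exact: I3.
Qed.

Lemma inv_star (R : realType) (V : finType) (l : nat) (G : 'I_l -> rel V)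
  (r : V -> 'I_l -> R) (k : nat) s s' :
  proc_star G r k s s' -> Inv G r k s -> Inv G r k s'.
Proof.
elim=> // s1 s2 s3 H12 _ IH I; apply: IH; exact: inv_proc I H12.
Qed.

Lemma inv_update (R : realType) (V : finType) (l : nat) (G : 'I_l -> rel V)
  (r : V -> 'I_l -> R) (k : nat) s x :
  Inv G r k s -> Inv G r k (update G s x).
Proof.
case=> I1 I2 I3 I4; split=> /=.
- move=> w; rewrite ffunE I1; apply/setP => q; rewrite in_setD [in RHS]in_set reach_update [in LHS]in_set.
  by case: (q \in processed s); case: (q \in new_cov _ _ _); case: (q \in reach_pairs _ _ _).
- move=> w; rewrite ffunE; apply: leq_trans (I2 w); apply: subset_leq_card; exact: subsetDl.
- move=> p q Hp; rewrite /pending /= inE negb_or => /andP [/andP [h1 _] h2].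
  by apply: I3 => //; rewrite /pending h1 h2.
- move=> w; rewrite ffunE => e q Hq; rewrite inE negb_or => /andP [Hc _].
  have eq : sketch s w :\: new_cov G (covered s) x = sketch s w.
    apply/eqP; rewrite -(subset_leqif_cards (subsetDl _ _)).
    rewrite e eqn_leq I2 andbT -{1}e; apply: subset_leq_card; exact: subsetDl.
  rewrite eq; apply: I4 => //; by rewrite -eq.
Qed.

Lemma inv_reach (R : realType) (V : finType) (l : nat) (G : 'I_l -> rel V)
  (r : V -> 'I_l -> R) (k : nat) s :
  skim_reachable G r k s -> Inv G r k s.
Proof.
elim=> [|s0 s1 v tau _ IH [s2 [Hst _ _ ->]]]; first exact: inv_init.
apply: inv_update; exact: inv_star Hst IH.
Qed.

Unset Implicit Arguments.

Theorem mainTheorem2 (R : realType) (V : finType) (l : nat)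
    (G : 'I_l -> rel V) (r : V -> 'I_l -> R) (k : nat)
    (r_range : forall z i, 0 <= r z i <= 1)
    (r_inj : forall z i z' j, r z i = r z' j -> (z, i) = (z', j))
    (k_pos : (0 < k)%N)
    (s s' : state V l) (v : V) (tau : R) :
  skim_reachable G r k s ->
  iteration G r k s s' v tau ->
  forall u : V, u \notin seeds s' ->
    sketch s' u = [set p in comb_sketch G r k (covered s') u | rk r p <= tau].
Proof.
move=> Hreach [s1 [Hst Hsel Htau ->]] u _.
have I0 := inv_reach Hreach.
have I1s := inv_star Hst I0.
have I' := inv_update v I1s.
case: I1s => J1 J2 J3 J4.
case: I' => K1 K2 _ _.
have Hbound := K2 u.
rewrite K1 /= in Hbound *.
rewrite /comb_sketch /bottomk /=.
set cov := covered s1 :|: new_cov G (covered s1) v in Hbound *.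
set S := reach_pairs G cov u in Hbound *.
have F1 : forall p, p \in S -> p \notin covered s1.
  move=> [z i]; rewrite inE /= => /and3P [_ hz _]; move: hz.
  by rewrite inE negb_or => /andP [].
clearbody S.
have Hpend : forall q, q \in S -> q \notin processed s1 -> pending s1 q.
  by move=> q hS hP; rewrite /pending F1.
have Hcase : (exists2 p0, p0 \in processed s1 & (tau = rk r p0 /\
     forall q, q \in processed s1 -> q \notin covered s1 -> rk r q <= tau))
   \/ ((forall q, ~~ pending s1 q) /\ tau = 1).
  case: Hsel => [e | [Hnp Hlt _]].
    left; have [[p0 Hp0 Ht] Hmax] := kth_max r k_pos e.
    exists p0; first by move: Hp0; rewrite J1 inE => /andP [].
    split; first by rewrite Htau.
    move=> q Hq Hc; have [p2 Hp2 Hle] := J4 v e q Hq Hc.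
    by rewrite Htau; exact: le_trans Hle (Hmax _ Hp2).
  by right; split => //; rewrite Htau; exact: kth_small.
apply/setP => p; rewrite !inE.
apply/idP/idP.
- case/andP => HP HS; rewrite HS /=; apply/andP; split.
    apply: leq_trans Hbound; apply: proper_card; apply/properP; split.
      apply/subsetP => q; rewrite !inE => /andP [hqS hlt]; rewrite hqS andbT.
      apply/negPn/negP => hqP; have := J3 p q HP (Hpend q hqS hqP).
      by move/(lt_le_trans hlt); rewrite ltxx.
    by exists p; rewrite !inE ?HP ?HS ?ltxx.
  case: Hcase => [[p0 _ [_ Hm]] | [_ ->]]; first exact: Hm HP (F1 p HS).
  by case/andP: (r_range p.1 p.2).
- case/andP => /andP [HS _] Hle; rewrite HS andbT.
  apply/negPn/negP => HnP; have Hq := Hpend p HS HnP.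
  case: Hcase => [[p0 Hp0 [Ht _]] | [Hn _]]; last by move: (Hn p); rewrite Hq.
  have Hge := J3 p0 p Hp0 Hq; rewrite -Ht in Hge.
  have e : rk r p = rk r p0 by rewrite -Ht; apply/eqP; rewrite eq_le Hle Hge.
  have := r_inj _ _ _ _ e; rewrite -!surjective_pairing => ep.
  by move: HnP; rewrite ep Hp0.
Qed.
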